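(* Let $j$ be a positive integer and for $w>1$ and a d.f. $F$ on $\mathbb{R}$ define the d.f. $$H_w(x)=\frac{F(x)}{\{w-(w-1)F(x)^j\}^{1/j}},\quad x\in\mathbb{R}.$$ Let $u,v>1$, let $N\sim$ Harris$(u,j)$ and $M\sim$ Harris$(v,j)$, let $X_1,X_2,\dots$ be i.i.d. with d.f. $F$, with $N,M,(X_i)$ mutually independent, and let $V=\max(X_1,\dots,X_N)$, so $P\{V\le x\}=H_u(x)$. If $V_1,V_2,\dots$ are i.i.d. copies of $V$, independent of $M$, then $P\{\max(V_1,\dots,V_M)\le x\}=H_{uv}(x)$ for all $x$. Hence the family $\{H_w:w>1\}$ is closed under taking maxima of Harris$(v,j)$-many i.i.d. copies (it is $M$-max stable).
   Context: For an integer $k>0$ and $a>1$, the Harris$(a,k)$ law is the distribution on the positive integers with PGF $\dfrac{s}{\{a-(a-1)s^k\}^{1/k}}$. *)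

(* Defs.v *)
From HB Require Import structures.
From mathcomp Require Import all_boot all_order all_algebra.
From mathcomp Require Import all_classical all_reals all_analysis.
Set Implicit Arguments. Unset Strict Implicit. Unset Printing Implicit Defensive.
Import Order.TTheory GRing.Theory Num.Theory.
Import numFieldNormedType.Exports.
Local Open Scope classical_set_scope.
Local Open Scope ring_scope.

Definition is_df (R : realType) (F : R -> R) : Prop :=
  {homo F : x y / x <= y} /\
  (forall x : R, F y @[y --> x^'+] --> F x) /\
  (F y @[y --> -oo] --> (0 : R)) /\
  (F y @[y --> +oo] --> (1 : R)).

Definition harris_pmf (R : realType) (a : R) (k : nat) (p : nat -> R) : Prop :=
  (forall n, 0 <= p n) /\
  forall s : R, 0 <= s <= 1 ->
    (\sum_(0 <= i < n) p i * s ^+ i) @[n --> \oo] -->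
      s / ((a - (a - 1) * s ^+ k) `^ (k%:R^-1)).

Definition Hw (R : realType) (j : nat) (F : R -> R) (w : R) (x : R) : R :=
  F x / ((w - (w - 1) * F x ^+ j) `^ (j%:R^-1)).

Definition mutual_indep d (T : measurableType d) (R : realType)
    (P : probability T R) (I : eqType) (E : I -> set (set T)) : Prop :=
  forall (J : seq I) (A : I -> set T), uniq J ->
    (forall i, i \in J -> E i (A i)) ->
    P (\big[setI/setT]_(i <- J) A i) = (\prod_(i <- J) P (A i))%E.

Definition rv_events d (T : measurableType d) (R : realType) (X : T -> R)
  : set (set T) := [set X @^-1` B | B in [set B : set R | measurable B]].

Definition nat_events (T : Type) (N : T -> nat) : set (set T) :=
  [set N @^-1` A | A in [set: set nat]].

(* max(Y_0, ..., Y_{n-1}) (equal to Y_0 when n = 0) *)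
Definition maxn_rv (R : realType) (T : Type) (Y : nat -> T -> R) (n : T -> nat)
  (t : T) : R := \big[Num.max/Y 0%N t]_(i < n t) Y i t.

(* Main.v *)
Require Import Defs.
From HB Require Import structures.
From mathcomp Require Import all_boot all_order all_algebra.
From mathcomp Require Import all_classical all_reals all_analysis.
From mathcomp Require Import ring lra.
Import Order.TTheory GRing.Theory Num.Theory.
Import numFieldNormedType.Exports.
Local Open Scope classical_set_scope.
Local Open Scope ring_scope.

Lemma bigsetI_mem (T : Type) (I : eqType) (s : seq I) (A : I -> set T) t :
  (\big[setI/setT]_(i <- s) A i) t <-> (forall i, i \in s -> A i t).
Proof.
elim: s => [|a s IH]; rewrite ?big_nil ?big_cons; first by split.
split.
  move=> [Ha /IH Hs] i; rewrite in_cons => /orP [/eqP -> //|]; exact: Hs.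
move=> H; split; first by apply: H; rewrite mem_head.
by apply/IH => i Hi; apply: H; rewrite in_cons Hi orbT.
Qed.

Lemma bigmax_le_iff (R : realType) (a x : R) n (f : nat -> R) :
  (\big[Num.max/a]_(i < n) f i <= x) <-> (a <= x /\ forall i, (i < n)%N -> f i <= x).
Proof.
elim: n f => [|n IH] f; first by rewrite big_ord0; split => [->|[]].
rewrite big_ord_recl /=.
rewrite (eq_bigr (fun i : 'I_n => f i.+1)); last by move=> i _; rewrite /bump /= add1n.
rewrite ge_max; split.
  move=> /andP [H0 /(IH (fun i => f i.+1)) [Ha Hf]]; split => // -[|i] //= Hi; exact: Hf.
move=> [Ha Hf]; apply/andP; split; first exact: Hf.
by apply/(IH (fun i => f i.+1)); split => // i Hi; apply: Hf.
Qed.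

Lemma prod_const_EFin (R : realType) (I : Type) (s : seq I) (c : R) :
  (\prod_(i <- s) c%:E)%E = (c ^+ size s)%:E.
Proof.
elim: s => [|a s IH]; first by rewrite big_nil.
by rewrite big_cons IH /= exprS EFinM.
Qed.

Lemma mle d (T : measurableType d) (R : realType) (Y : T -> R) (x : R) :
  measurable_fun setT Y ->
  measurable [set t | Y t <= x] /\ rv_events Y [set t | Y t <= x].
Proof.
move=> hY.
have E : Y @^-1` [set` `]-oo, x]] = [set t | Y t <= x].
  by apply/seteqP; split => t /=; rewrite in_itv.
split; last by exists [set` `]-oo, x]] => //; exact: measurable_itv.
rewrite -E -(setTI (Y @^-1` _)); exact: hY (measurable_itv _).
Qed.

Lemma key d (T : measurableType d) (R : realType) (P : probability T R)
  (Y : nat -> T -> R) (K : T -> nat) (p : nat -> R) (c x L : R) :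
  (forall n, measurable (K @^-1` [set n])) ->
  (forall i, measurable [set t | Y i t <= x]) ->
  (forall n, P (K @^-1` [set n] `&` \big[setI/setT]_(i <- iota 0 n) [set t | Y i t <= x])
     = (p n * c ^+ n)%:E) ->
  p 0%N = 0 ->
  (\sum_(0 <= i < n) p i * c ^+ i) @[n --> \oo] --> L ->
  P [set t | maxn_rv Y K t <= x] = L%:E.
Proof.
move=> hK hY hprod hp0 hL.
pose G n := K @^-1` [set n] `&` [set t | maxn_rv Y K t <= x].
have eqG0 : G 0%N = K @^-1` [set 0%N] `&` [set t | Y 0%N t <= x].
  rewrite /G; apply/seteqP; split => t [Kt Ht]; have {}Kt : K t = 0%N := Kt;
  split => //; move: Ht; rewrite /= /maxn_rv Kt big_ord0 //.
have eqGS n : G n.+1 = K @^-1` [set n.+1] `&`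
    \big[setI/setT]_(i <- iota 0 n.+1) [set t | Y i t <= x].
  rewrite /G; apply/seteqP; split => t [Kt Ht]; have {}Kt : K t = n.+1 := Kt;
  split => //.
    apply/bigsetI_mem => i; rewrite mem_iota add0n => /andP [_ Hi].
    by move: Ht; rewrite /= /maxn_rv Kt => /(@bigmax_le_iff _ _ _ _ (fun i => Y i t)) [_]; apply.
  rewrite /= /maxn_rv Kt; apply/(@bigmax_le_iff _ _ _ _ (fun i => Y i t)); move/bigsetI_mem: Ht => Ht.
  split; first by apply: (Ht 0%N); rewrite mem_iota.
  by move=> i Hi; apply: Ht; rewrite mem_iota add0n.
have mG n : measurable (G n).
  case: n => [|n]; first by rewrite eqG0; apply: measurableI.
  rewrite eqGS; apply: measurableI => //.
  elim: (iota 0 n.+1) => [|a s IH]; rewrite ?big_nil ?big_cons //.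
  exact: measurableI.
have PG n : P (G n) = (p n * c ^+ n)%:E.
  case: n => [|n]; last by rewrite eqGS hprod.
  rewrite hp0 mul0r; apply/eqP; rewrite eq_le measure_ge0 andbT.
  have := hprod 0%N; rewrite big_nil setIT hp0 mul0r => <-.
  apply: le_measure; [exact/mem_set/mG | exact/mem_set/hK |].
  by move=> t [].
have triv : trivIset setT G.
  by move=> n m _ _ [t [[/= Hn _] [/= Hm _]]]; rewrite -Hn -Hm.
have U : \bigcup_n G n = [set t | maxn_rv Y K t <= x].
  apply/seteqP; split => t /=; first by move=> [n _ []].
  by move=> Ht; exists (K t) => //.
have hs0 : semi_sigma_additive P := @measure_semi_sigma_additive _ _ _ P.
have hs := hs0 G mG triv (bigcupT_measurable G mG).
rewrite U in hs.
have hs' : (\sum_(0 <= i < n) p i * c ^+ i)%:E @[n --> \oo] --> L%:E.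
  apply: cvg_EFin; last exact: hL.
  by near=> n.
have hs2 : (fun n => (\sum_(0 <= i < n) p i * c ^+ i)%:E) @ \oo --> P [set t | maxn_rv Y K t <= x].
  rewrite -(@eq_cvg _ _ _ (fun n => (\sum_(0 <= i < n) P (G i))%E)) //.
  by move=> n /=; rewrite -sumEFin; apply: eq_bigr => i _; rewrite PG.
by rewrite -(cvg_lim (@ereal_hausdorff R) hs2) (cvg_lim (@ereal_hausdorff R) hs').
Unshelve. all: by end_near.
Qed.

Lemma alg (R : realType) (j : nat) (u v f : R) : (0 < j)%N -> 1 < u -> 1 < v ->
  0 <= f <= 1 ->
  let H := f / (u - (u - 1) * f ^+ j) `^ (j%:R^-1) in
  H / (v - (v - 1) * H ^+ j) `^ (j%:R^-1) =
  f / (u * v - (u * v - 1) * f ^+ j) `^ (j%:R^-1).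
Proof.
move=> j0 u1 v1 /andP [f0 f1] H.
have fj0 : 0 <= f ^+ j by apply: exprn_ge0.
have fj1 : f ^+ j <= 1 by apply: exprn_ile1.
set a := u - (u - 1) * f ^+ j.
set b := u * v - (u * v - 1) * f ^+ j.
have a1 : 1 <= a.
  rewrite /a; nra.
have a0 : 0 < a by apply: lt_le_trans a1.
have b0 : 0 < b.
  have -> : b = v * a - (v - 1) * f ^+ j by rewrite /b /a; ring.
  nra.
have jn0 : (j%:R : R) != 0 by rewrite pnatr_eq0 -lt0n.
set r := a `^ (j%:R^-1).
have r0 : 0 < r by apply: powR_gt0.
have rj : r ^+ j = a.
  by rewrite -powR_mulrn ?powR_ge0 // -powRrM mulVf // powRr1 // ltW.
have Hj : H ^+ j = f ^+ j / a by rewrite /H expr_div_n rj.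
have E : v - (v - 1) * H ^+ j = b / a.
  by rewrite Hj /b /a; field; rewrite -/a gt_eqF.
have Ea : (a^-1) `^ (j%:R^-1) = r^-1.
  by rewrite -powR_inv1 ?(ltW a0) // -powRrM mulN1r powRN.
rewrite E powRM ?(ltW b0) ?invr_ge0 ?(ltW a0) // Ea /H -/r.
have bp : 0 < b `^ (j%:R^-1) by apply: powR_gt0.
by field; rewrite !gt_eqF.
Qed.

Theorem proposition2p2 (R : realType) (j : nat) (F : R -> R) (u v : R)
  (d : measure_display) (T : measurableType d) (P : probability T R)
  (pN pM : nat -> R) (N M : T -> nat) (X : nat -> T -> R) (V' : nat -> T -> R) :
  (0 < j)%N -> is_df F -> 1 < u -> 1 < v ->
  harris_pmf u j pN -> harris_pmf v j pM ->
  (forall n, measurable (N @^-1` [set n])) ->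
  (forall n, measurable (M @^-1` [set n])) ->
  (forall n, P (N @^-1` [set n]) = (pN n)%:E) ->
  (forall n, P (M @^-1` [set n]) = (pM n)%:E) ->
  (forall i, measurable_fun setT (X i)) ->
  (forall i x, P [set t | X i t <= x] = (F x)%:E) ->
  mutual_indep P (fun k : nat + bool => match k with
                    | inl i => rv_events (X i)
                    | inr true => nat_events N
                    | inr false => nat_events M end) ->
  (forall i, measurable_fun setT (V' i)) ->
  (forall i x, P [set t | V' i t <= x] = P [set t | maxn_rv X N t <= x]) ->
  mutual_indep P (fun k : option nat => match k with
                    | Some i => rv_events (V' i)
                    | None => nat_events M end) ->
  (forall x, P [set t | maxn_rv X N t <= x] = (Hw j F u x)%:E) /\
  (forall x, P [set t | maxn_rv V' M t <= x] = (Hw j F (u * v) x)%:E).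
Proof.
move=> j0 _ u1 v1 [pN0 hpN] [pM0 hpM] mN mM PN PM mX PX indX mV PV indV.
have p0 (a : R) p : harris_pmf a j p -> p 0%N = 0.
  move=> [_ hp]; have := hp 0 (ltac:(by rewrite lexx ler01)).
  rewrite mul0r.
  have -> : (fun n => \sum_(0 <= i < n) p i * 0 ^+ i) =
            (fun n => if n is 0%N then 0 else p 0%N).
    apply/funext => -[|n]; first by rewrite big_geq.
    rewrite big_nat_recl // expr0 mulr1 big1 ?addr0 // => i _.
    by rewrite expr0n /= mulr0.
  move=> h.
  have L1 : lim ((fun n => if n is 0%N then 0 else p 0%N) @ \oo) = p 0%N.
    by apply: norm_lim_near_cst; exists 1%N => // -[|n].
  by rewrite -L1 (cvg_lim _ h).
have pN00 := p0 _ _ (conj pN0 hpN).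
have pM00 := p0 _ _ (conj pM0 hpM).
have F01 x : 0 <= F x <= 1.
  rewrite -!lee_fin -(PX 0%N) measure_ge0 /=; apply: probability_le1.
  exact: (@mle _ _ _ _ x (mX 0%N)).1.
have part1 x : P [set t | maxn_rv X N t <= x] = (Hw j F u x)%:E.
  apply: (@key _ _ _ P X N pN (F x)) => //.
  - by move=> i; exact: (@mle _ _ _ _ x (mX i)).1.
  - move=> n.
    have := indX (inr true :: map inl (iota 0 n))
      (fun k : nat + bool => match k with inl i => [set t | X i t <= x]
                | inr true => N @^-1` [set n] | inr false => setT end).
    rewrite !big_cons !big_map /=.
    rewrite (eq_bigr (fun _ => (F x)%:E)); last by move=> i _; rewrite PX.
    rewrite prod_const_EFin size_iota PN -EFinM => -> //.
      rewrite map_inj_uniq ?iota_uniq ?andbT; last by move=> ? ? [].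
      by apply/mapP => -[].
    move=> k; rewrite in_cons => /orP [/eqP -> | /mapP [i _ ->]].
      by exists [set n].
    exact: (@mle _ _ _ _ x (mX i)).2.
  - exact: hpN.
split => // x.
have H01 : 0 <= Hw j F u x <= 1.
  rewrite -!lee_fin -part1 -(PV 0%N) measure_ge0 /=; apply: probability_le1.
  exact: (@mle _ _ _ _ x (mV 0%N)).1.
rewrite /Hw -(@alg _ _ _ _ _ j0 u1 v1 (F01 x)) -/(Hw j F u x).
apply: (@key _ _ _ P V' M pM (Hw j F u x)) => //.
- by move=> i; exact: (@mle _ _ _ _ x (mV i)).1.
- move=> n.
  have := indV (None :: map Some (iota 0 n))
    (fun k : option nat => match k with Some i => [set t | V' i t <= x]
              | None => M @^-1` [set n] end).
  rewrite !big_cons !big_map /=.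
  rewrite (eq_bigr (fun _ => (Hw j F u x)%:E)); last by move=> i _; rewrite PV part1.
  rewrite prod_const_EFin size_iota PM -EFinM => -> //.
    rewrite map_inj_uniq ?iota_uniq ?andbT; last by move=> ? ? [].
    by apply/mapP => -[].
  move=> k; rewrite in_cons => /orP [/eqP -> | /mapP [i _ ->]].
    by exists [set n].
  exact: (@mle _ _ _ _ x (mV i)).2.
- exact: hpM.
Qed.
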